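(* Let $R$ be a zero-dimensional Gorenstein ring and $M$ a finitely generated $R$-module. Then $\mathrm{char}_R(M)=\mathrm{Ann}_R(M)$.
   Context: $M^*=\mathrm{Hom}_R(M,R)$, $\bigcap^n_RM=(\bigwedge^n_R(M^* ))^*$. For a finitely generated $R$-module $M$, choose $n>0$ and an exact sequence $0\to N\to R^n\to M\to0$ and set $\mathrm{char}_R(M)=\mathrm{im}(\bigcap^n_RN\to\bigcap^n_RR^n=R)$ (independent of the choice). *)

(* Defs.v *)
From HB Require Import structures.
From mathcomp Require Import all_boot all_order all_algebra.
Set Implicit Arguments. Unset Strict Implicit. Unset Printing Implicit Defensive.
Import Order.TTheory GRing.Theory Num.Theory.
Local Open Scope ring_scope.

Section CommAlg.
Variable R : comNzRingType.

Definition is_linear (U V : lmodType R) (f : U -> V) : Prop :=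
  forall (a : R) (u v : U), f (a *: u + v) = a *: f u + f v.
Definition is_lform (U : lmodType R) (f : U -> R) : Prop :=
  forall (a : R) (u v : U), f (a *: u + v) = a * f u + f v.

Definition is_ideal (I : R -> Prop) : Prop :=
  [/\ I 0, (forall x y, I x -> I y -> I (x + y)) & (forall r x, I x -> I (r * x))].

Definition artinian : Prop :=
  forall I : nat -> R -> Prop, (forall k, is_ideal (I k)) ->
    (forall k x, I k.+1 x -> I k x) ->
    exists k0, forall k, (k0 <= k)%N -> forall x, I k x <-> I k0 x.

Definition self_injective : Prop :=
  forall (A B : lmodType R) (i : A -> B) (g : A -> R),
    is_linear i -> injective i -> is_lform g ->
    exists h : B -> R, is_lform h /\ forall a, h (i a) = g a.

(* Zero-dimensional Gorenstein ring = Artinian self-injective ring (Bass). *)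
Definition zero_dim_gorenstein : Prop := artinian /\ self_injective.

Definition fin_gen (M : lmodType R) : Prop :=
  exists n (v : 'I_n -> M), forall m : M,
    exists c : 'I_n -> R, m = \sum_(i < n) c i *: v i.

Definition annihilator (M : lmodType R) (r : R) : Prop :=
  forall m : M, r *: m = 0.

(* Elements of the dual N^dual of a submodule N (given as a predicate S on V)
   are represented by functions V -> R that are linear on S, up to
   agreement on S. *)
Definition sub_dual (V : lmodType R) (S : V -> Prop) (phi : V -> R) : Prop :=
  forall a u v, S u -> S v -> phi (a *: u + v) = a * phi u + phi v.
Definition sub_eq (V : lmodType R) (S : V -> Prop) (phi psi : V -> R) : Prop :=
  forall u, S u -> phi u = psi u.

Definition upd (V : lmodType R) n (phi : 'I_n -> V -> R) (i : 'I_n) (x : V -> R) :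
  'I_n -> V -> R := fun j => if j == i then x else phi j.

(* Phi is an element of (\bigwedge^n (N^dual))^dual, i.e. a (well-defined)
   alternating R-multilinear form on (N^dual)^n. *)
Definition alt_multilin (V : lmodType R) n (S : V -> Prop)
    (Phi : ('I_n -> V -> R) -> R) : Prop :=
  [/\ (forall phi psi, (forall i, sub_dual S (phi i)) ->
          (forall i, sub_dual S (psi i)) ->
          (forall i, sub_eq S (phi i) (psi i)) -> Phi phi = Phi psi),
      (forall phi i a psi chi, (forall j, sub_dual S (phi j)) ->
          sub_dual S psi -> sub_dual S chi ->
          Phi (upd phi i (fun u => a * psi u + chi u))
            = a * Phi (upd phi i psi) + Phi (upd phi i chi))
    & (forall phi i j, (forall k, sub_dual S (phi k)) -> i != j ->
          sub_eq S (phi i) (phi j) -> Phi phi = 0)].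

(* For a presentation f : R^n ->> M with kernel N, char_R(M) is the image of
   \bigcap^n N -> \bigcap^n R^n = R, the last identification being
   Psi |-> Psi(e_1^dual /\ ... /\ e_n^dual); so the image consists of the values
   Phi(e_1^dual|_N, ..., e_n^dual|_N). *)
Definition char_pres (M : lmodType R) n (f : 'rV[R]_n -> M) (r : R) : Prop :=
  exists Phi, alt_multilin (fun v => f v = 0) Phi /\
              r = Phi (fun i (v : 'rV[R]_n) => v ord0 i).

End CommAlg.

(* Main.v *)
From HB Require Import structures.
From mathcomp Require Import all_boot all_order all_algebra.
From mathcomp Require Import boolp.
Require Import Defs.
From Stdlib Require Import ClassicalEpsilon.
From mathcomp Require Import ring.
Set Implicit Arguments. Unset Strict Implicit. Unset Printing Implicit Defensive.
Import GRing.Theory.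
Local Open Scope ring_scope.

Definition submod_ok (R : comNzRingType) n (S : 'rV[R]_n -> Prop) :=
  S 0 /\ forall a u v, S u -> S v -> S (a *: u + v).

Record subv (R : comNzRingType) n (S : 'rV[R]_n -> Prop) (H : submod_ok S) :=
  SubV { sv : 'rV[R]_n; svP : S sv }.

HB.instance Definition _ R n S H := gen_eqMixin (@subv R n S H).
HB.instance Definition _ R n S H := gen_choiceMixin (@subv R n S H).

Section SubMod.
Variables (R : comNzRingType) (n : nat) (S : 'rV[R]_n -> Prop) (H : submod_ok S).
Local Notation T := (subv H).

Lemma subv_inj (x y : T) : sv x = sv y -> x = y.
Proof. case: x => x px; case: y => y py /= e; subst y. by rewrite (Prop_irrelevance px py). Qed.

Lemma SH0 : S 0. Proof. by case: H. Qed.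
Lemma SL a u v : S u -> S v -> S (a *: u + v). Proof. by case: H => _; apply. Qed.
Lemma SD u v : S u -> S v -> S (u + v). Proof. by move=> *; rewrite -(scale1r u); apply: SL. Qed.
Lemma SZ a u : S u -> S (a *: u). Proof. by move=> *; rewrite -(addr0 (a *: u)); apply: SL => //; apply: SH0. Qed.
Lemma SN u : S u -> S (- u). Proof. by move=> *; rewrite -scaleN1r; apply: SZ. Qed.

Definition sv0 : T := SubV H SH0.
Definition svadd (x y : T) : T := SubV H (SD (svP x) (svP y)).
Definition svopp (x : T) : T := SubV H (SN (svP x)).
Definition svscale (a : R) (x : T) : T := SubV H (SZ a (svP x)).

Lemma svaddA : associative svadd. Proof. by move=> x y z; apply: subv_inj; rewrite /= addrA. Qed.
Lemma svaddC : commutative svadd. Proof. by move=> x y; apply: subv_inj; rewrite /= addrC. Qed.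
Lemma svadd0 : left_id sv0 svadd. Proof. by move=> x; apply: subv_inj; rewrite /= add0r. Qed.
Lemma svaddN : left_inverse sv0 svopp svadd. Proof. by move=> x; apply: subv_inj; rewrite /= addNr. Qed.
End SubMod.

HB.instance Definition _ (R : comNzRingType) n S H := GRing.isZmodule.Build (@subv R n S H)
  (@svaddA R n S H) (@svaddC R n S H) (@svadd0 R n S H) (@svaddN R n S H).

Section SubMod2.
Variables (R : comNzRingType) (n : nat) (S : 'rV[R]_n -> Prop) (H : submod_ok S).
Local Notation T := (subv H).
Lemma svscaleA a b (v : T) : svscale a (svscale b v) = svscale (a * b) v.
Proof. by apply: subv_inj; rewrite /= scalerA. Qed.
Lemma svscale1 : left_id 1 (@svscale R n S H).
Proof. by move=> v; apply: subv_inj; rewrite /= scale1r. Qed.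
Lemma svscaleDr : right_distributive (@svscale R n S H) +%R.
Proof. by move=> a u v; apply: subv_inj; rewrite /= scalerDr. Qed.
Lemma svscaleDl (v : T) : {morph (@svscale R n S H)^~ v : a b / a + b}.
Proof. by move=> a b; apply: subv_inj; rewrite /= scalerDl. Qed.
End SubMod2.

HB.instance Definition _ (R : comNzRingType) n S H := GRing.Zmodule_isLmodule.Build R (@subv R n S H)
  (@svscaleA R n S H) (@svscale1 R n S H) (@svscaleDr R n S H) (@svscaleDl R n S H).

Lemma minimal_princ (R : comNzRingType) : artinian R -> forall (Q : R -> Prop) x0, Q x0 ->
  exists x, Q x /\ forall y, Q y -> (exists s, y = x * s) -> exists t, x = y * t.
Proof.
move=> art Q x0 Qx0; apply: NNPP => Hn.
have H : forall x, Q x -> exists y, Q y /\ (exists s, y = x * s) /\ ~ exists t, x = y * t.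
  move=> x Qx; apply: NNPP => Hy; apply: Hn; exists x; split=> // y Qy ys.
  by apply: NNPP => nt; apply: Hy; exists y.
pose P x y := Q y /\ (exists s, y = x * s) /\ ~ exists t, x = y * t.
pose nxt x := epsilon (inhabits x) (P x).
have Hnxt : forall x, Q x -> P x (nxt x).
  by move=> x Qx; apply: (epsilon_spec (inhabits x) (P x)); apply: H.
pose sq k := iter k nxt x0.
have Qsq : forall k, Q (sq k) by elim=> //= k IH; case: (Hnxt _ IH).
pose I k := fun z => exists s, z = sq k * s.
have HI : forall k, is_ideal (I k).
  move=> k; split.
  + by exists 0; rewrite mulr0.
  + by move=> x y [s1 ->] [s2 ->]; exists (s1 + s2); rewrite mulrDr.
  + by move=> r x [s ->]; exists (r * s); rewrite mulrCA.
have HD : forall k x, I k.+1 x -> I k x.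
  move=> k x [s ->]; case: (Hnxt _ (Qsq k)) => _ [[s0 e] _].
  by exists (s0 * s); rewrite /sq /= -/(sq k) e mulrA.
have [k0 Hk0] := art I HI HD.
have : I k0.+1 (sq k0) by apply/(Hk0 k0.+1 (leqnSn _)); exists 1; rewrite mulr1.
by case => t e; case: (Hnxt _ (Qsq k0)) => _ [_ []]; exists t.
Qed.

Lemma cogen (R : comNzRingType) : artinian R -> forall J : R -> Prop, is_ideal J -> ~ J 1 ->
  exists a : R, a != 0 /\ forall b, J b -> a * b = 0.
Proof.
move=> art J [J0 JD JM] nJ1.
have JMr : forall x r, J x -> J (x * r) by move=> x r Jx; rewrite mulrC; apply: JM.
pose Q1 y := exists E, [/\ J E, E * E = E & y = 1 - E].
have [x [[e [Je ee ->]] minx]] := @minimal_princ R art Q1 1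
  (ex_intro _ 0 (And3 J0 (mul0r 0) (esym (subr0 1)))).
have e1e : e * (1 - e) = 0 by rewrite mulrBr mulr1 ee subrr.
have nil : forall b, J b -> exists N, ((1 - e) * b) ^+ N = 0.
  move=> b Jb; set c := (1 - e) * b.
  have Jc : J c by apply: JM.
  pose Q2 y := exists j, (0 < j)%N /\ y = c ^+ j.
  have [x2 [[k [k0 ->]] mink]] := @minimal_princ R art Q2 c
     (ex_intro _ 1%N (conj (ltn0Sn 0) (esym (expr1 c)))).
  have [d hd] : exists d, c ^+ k = c ^+ k.+1 * d.
    apply: mink; first by exists k.+1.
    by exists c; rewrite exprSr.
  have hj : forall j, c ^+ k = c ^+ (k + j) * d ^+ j.
    elim=> [|j IH]; first by rewrite addn0 expr0 mulr1.
    rewrite IH addnS !exprS exprD [in LHS]hd exprS; ring.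
  pose f1 := c ^+ k * d ^+ k.
  have f1f1 : f1 * f1 = f1 by rewrite /f1 {3}(hj k) exprD; ring.
  have ck : c ^+ k = c * c ^+ k.-1 by rewrite -exprS prednK.
  have Jf1 : J f1.
    rewrite /f1 ck. exact: (JMr _ _ (JMr _ _ Jc)).
  have ec : e * c = 0 by rewrite /c mulrA e1e mul0r.
  have ef1 : e * f1 = 0.
    by rewrite /f1 ck !mulrA ?ec ?e1e !mul0r.
  have Q1E : Q1 (1 - (e + f1)).
    exists (e + f1); split => //; first by apply: JD.
    transitivity (e * e + (e * f1 + e * f1) + f1 * f1); first ring.
    by rewrite ee f1f1 ef1 addr0 addr0.
  have hs : exists s, 1 - (e + f1) = (1 - e) * s.
    exists (1 - f1); rewrite mulrBr mulr1 !mulrBl mul1r.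
    transitivity (1 - e - (f1 - 0)); first ring.
    by congr (_ - (_ - _)); apply: esym.
  have [t ht] := minx _ Q1E hs.
  have f10 : f1 = 0.
    have -> : f1 = f1 * (1 - e).
      transitivity (f1 - e * f1); last ring.
      by rewrite ef1 subr0.
    rewrite ht mulrA.
    have -> : f1 * (1 - (e + f1)) = f1 - e * f1 - f1 * f1 by ring.
    by rewrite ef1 f1f1 subr0 subrr mul0r.
  by exists k; rewrite (hj k) exprD -mulrA -/f1 f10 !mulr0.
pose Q3 y := y != 0 /\ exists t, y = (1 - e) * t.
have Q31 : Q3 (1 - e).
  split; last by exists 1; rewrite mulr1.
  apply/negP => /eqP h; apply: nJ1.
  have -> : (1 : R) = e by apply/eqP; rewrite -subr_eq0 h.
  exact: Je.
have [a [[anz [t0 at0]] mina]] := @minimal_princ R art Q3 _ Q31.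
exists a; split => // b Jb.
have ae : a * e = 0.
  rewrite at0; transitivity (t0 * (e * (1 - e))); first ring.
  by rewrite e1e mulr0.
have abc : a * b = a * ((1 - e) * b).
  transitivity (a * b - (a * e) * b); last ring.
  by rewrite ae mul0r subr0.
case: (eqVneq (a * b) 0) => // nz.
have Q3ab : Q3 (a * b) by split => //; exists (t0 * b); rewrite at0 mulrA.
have [t ht] := mina _ Q3ab (ex_intro _ b erefl).
have [N hN] := nil b Jb.
have hj : forall j, a = a * ((1 - e) * b * t) ^+ j.
  elim=> [|j IH]; first by rewrite expr0 mulr1.
  rewrite exprS {1}IH {1}ht abc; ring.
move: anz; rewrite (hj N) exprMn hN mul0r mulr0 eqxx //.
Qed.

Section Main.
Variable R : comNzRingType.

Lemma lf0 (U : lmodType R) (h : U -> R) : is_lform h -> h 0 = 0.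
Proof.
move=> H; have e := H 1 0 0; rewrite scaler0 addr0 mul1r in e.
by apply: (addrI (h 0)); rewrite addr0 -e.
Qed.
Lemma lfZ (U : lmodType R) (h : U -> R) a u : is_lform h -> h (a *: u) = a * h u.
Proof. by move=> H; have := H a u 0; rewrite addr0 (lf0 H) addr0. Qed.
Lemma lfD (U : lmodType R) (h : U -> R) u v : is_lform h -> h (u + v) = h u + h v.
Proof. by move=> H; have := H 1 u v; rewrite scale1r mul1r. Qed.
Lemma lf_sum (U : lmodType R) (h : U -> R) (I : Type) (s : seq I) (F : I -> U) :
  is_lform h -> h (\sum_(i <- s) F i) = \sum_(i <- s) h (F i).
Proof.
move=> H; elim: s => [|x s IH]; first by rewrite !big_nil (lf0 H).
by rewrite !big_cons (lfD _ _ H) IH.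
Qed.
Lemma lf_row n (h : 'rV[R]_n -> R) u : is_lform h ->
  h u = \sum_j u 0 j * h (delta_mx 0 j).
Proof.
move=> H; rewrite {1}(row_sum_delta u) (lf_sum _ _ H).
by apply: eq_bigr => j _; rewrite (lfZ _ _ H).
Qed.

Lemma lin0 (U V : lmodType R) (f : U -> V) : is_linear f -> f 0 = 0.
Proof.
move=> H; have e := H 1 0 0; rewrite scaler0 addr0 scale1r in e.
by apply: (addrI (f 0)); rewrite addr0 -e.
Qed.
Lemma linZ (U V : lmodType R) (f : U -> V) a u : is_linear f -> f (a *: u) = a *: f u.
Proof. by move=> H; have := H a u 0; rewrite addr0 (lin0 H) addr0. Qed.
Lemma linD (U V : lmodType R) (f : U -> V) u v : is_linear f -> f (u + v) = f u + f v.
Proof. by move=> H; have := H 1 u v; rewrite !scale1r. Qed.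
Lemma linB (U V : lmodType R) (f : U -> V) u v : is_linear f -> f (u - v) = f u - f v.
Proof.
move=> H; have := H (-1) v u; rewrite !scaleN1r => e.
by rewrite addrC e addrC.
Qed.

Lemma extend n (S : 'rV[R]_n -> Prop) (H : submod_ok S) : self_injective R ->
  forall g, sub_dual S g -> exists h : 'rV[R]_n -> R, is_lform h /\ sub_eq S h g.
Proof.
move=> inj g hg.
have li : is_linear (@sv R n S H) by [].
have ii : injective (@sv R n S H) by move=> x y; apply: subv_inj.
have lg : is_lform (fun x : subv H => g (sv x)).
  by move=> a x y; rewrite /= hg //; apply: svP.
have [h [lh eh]] := inj _ _ _ _ li ii lg.
by exists h; split => // u Su; exact: (eh (SubV H Su)).
Qed.

Lemma prod_req (I : Type) (s : seq I) (r : R) (F G : I -> R) :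
  (forall i, r * F i = r * G i) -> r * \prod_(i <- s) F i = r * \prod_(i <- s) G i.
Proof.
move=> H; elim: s => [|x s IH]; first by rewrite !big_nil.
rewrite !big_cons.
transitivity ((r * F x) * \prod_(i <- s) F i); first ring.
rewrite H; transitivity (G x * (r * \prod_(i <- s) F i)); first ring.
rewrite IH; ring.
Qed.

Lemma det_req n (r : R) (A B : 'M[R]_n) : (forall i j, r * A i j = r * B i j) ->
  r * \det A = r * \det B.
Proof.
move=> H; rewrite /determinant !mulr_sumr; apply: eq_bigr => s _.
rewrite mulrCA [r * (_ * _)]mulrCA; congr (_ * _).
by apply: prod_req => i; apply: H.
Qed.

End Main.

Theorem propositionC8 (R : comNzRingType) (M : lmodType R) :
  zero_dim_gorenstein R -> fin_gen M ->
  forall (n : nat) (f : 'rV[R]_n -> M),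
    (0 < n)%N -> is_linear f -> (forall m : M, exists v, f v = m) ->
    forall r : R, char_pres f r <-> annihilator M r.
Proof.
move=> [art inj] _ n f _ fl fs r.
pose S := fun v : 'rV[R]_n => f v = 0.
have HS : submod_ok S.
  split; first exact: lin0 fl.
  by move=> a u v; rewrite /S => hu hv; rewrite fl hu hv scaler0 addr0.
have sd0 : forall phi, sub_dual S phi -> phi 0 = 0.
  move=> phi hp; have e := hp 1 0 0 (SH0 HS) (SH0 HS).
  rewrite scaler0 addr0 mul1r in e.
  by apply: (addrI (phi 0)); rewrite addr0 -e.
have sdZ : forall phi a u, sub_dual S phi -> S u -> phi (a *: u) = a * phi u.
  move=> phi a u hp hu; have := hp a u 0 hu (SH0 HS).
  by rewrite addr0 (sd0 _ hp) addr0.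
have upd_sd : forall (phi : 'I_n -> 'rV[R]_n -> R) i X, (forall j, sub_dual S (phi j)) ->
    sub_dual S X -> forall j, sub_dual S (upd phi i X j).
  by move=> phi i X hp hX j; rewrite /upd; case: (j == i).
pose pi := fun (i : 'I_n) (v : 'rV[R]_n) => v ord0 i.
have hpi : forall i, sub_dual S (pi i) by move=> i a u v _ _; rewrite /pi !mxE.
split.
- move=> [Phi [[Pwd Pml Palt] rE]].
  have Pext : forall phi i X Y, (forall j, sub_dual S (phi j)) -> sub_dual S X ->
      sub_dual S Y -> (forall u, S u -> X u = Y u) -> Phi (upd phi i X) = Phi (upd phi i Y).
    move=> phi i X Y hp hX hY he; apply: Pwd; try exact: upd_sd.
    by move=> j u Su; rewrite /upd; case: (j == i) => //; apply: he.
  have sdz : sub_dual S (fun _ : 'rV[R]_n => 0 : R) by move=> *; rewrite mulr0 addr0.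
  have Pzero : forall phi i, (forall j, sub_dual S (phi j)) ->
      Phi (upd phi i (fun _ => 0)) = 0.
    move=> phi i hp; have e := Pml phi i 1 _ _ hp sdz sdz.
    have e2 : Phi (upd phi i (fun u => 1 * (fun _ : 'rV[R]_n => 0 : R) u + (fun _ => 0) u))
              = Phi (upd phi i (fun _ => 0)).
      apply: Pext => //; first by move=> b u v _ _ /=; ring.
      by move=> u _; rewrite mul1r addr0.
    rewrite e2 mul1r in e.
    by apply: (addrI (Phi (upd phi i (fun _ => 0)))); rewrite addr0 -e.
  have sd_sum : forall (s : seq 'I_n) (a : 'I_n -> R) (psi : 'I_n -> 'rV[R]_n -> R),
      (forall l, sub_dual S (psi l)) -> sub_dual S (fun u => \sum_(l <- s) a l * psi l u).
    move=> s a psi hp b u v hu hv; rewrite big_distrr -big_split /=.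
    by apply: eq_bigr => l _; rewrite hp //; ring.
  have Psum : forall phi i (s : seq 'I_n) (a : 'I_n -> R) (psi : 'I_n -> 'rV[R]_n -> R),
      (forall j, sub_dual S (phi j)) -> (forall l, sub_dual S (psi l)) ->
      Phi (upd phi i (fun u => \sum_(l <- s) a l * psi l u))
        = \sum_(l <- s) a l * Phi (upd phi i (psi l)).
    move=> phi i s a psi hp hps; elim: s => [|x s IH].
      rewrite big_nil; transitivity (Phi (upd phi i (fun _ => 0))); last exact: Pzero.
      apply: Pext => //; first exact: (sd_sum _ _ _ hps).
      by move=> u _; rewrite big_nil.
    rewrite big_cons -IH -(Pml phi i (a x) (psi x) (fun u => \sum_(l <- s) a l * psi l u)) //;
      last exact: (sd_sum _ _ _ hps).
    apply: Pext => //; first exact: (sd_sum _ _ _ hps).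
      by move=> b u v hu hv /=; rewrite hps // (sd_sum s a psi hps) //; ring.
    by move=> u _; rewrite big_cons.
  have kill : forall k, is_lform k -> (forall u, S u -> k u = 0) ->
      forall j, k (delta_mx 0 j) * r = 0.
    move=> k hk k0 j.
    have hkS : sub_dual S k by move=> a u v _ _; apply: hk.
    have e := Psum pi j (index_enum 'I_n) (fun l => k (delta_mx 0 l)) pi hpi hpi.
    rewrite -(@Pext pi j k) // in e; last first.
      by move=> u _; rewrite (lf_row _ hk); apply: eq_bigr => l _; rewrite /pi mulrC.
      exact: (sd_sum _ _ _ hpi).
    rewrite (@Pext pi j k (fun _ => 0)) // Pzero // in e.
      rewrite (bigD1 j) //= big1 ?addr0 in e.
        rewrite rE; transitivity (k (delta_mx 0 j) * Phi (upd pi j (pi j))); last by rewrite -e.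
        congr (_ * _); apply: Pwd => //; first exact: upd_sd.
        by move=> l u _; rewrite /upd; case: eqP => // ->.
      move=> l nlj; rewrite (@Palt _ j l) ?mulr0 //; first exact: upd_sd.
        by rewrite eq_sym.
      by move=> u _; rewrite /upd eqxx; case: (l == j).
  move=> m; have [w <-] := fs m; rewrite -(linZ _ _ fl).
  set u := r *: w.
  have ue : u = r *: w by [].
  clearbody u.
  case: (eqVneq (f u) 0) => // nzu; exfalso.
  pose J := fun a : R => f (a *: u) = 0.
  have HJ : is_ideal J.
    split; first by rewrite /J scale0r (lin0 fl).
      by move=> x y Jx Jy; rewrite /J scalerDl (linD _ _ fl) Jx Jy addr0.
    by move=> x y Jy; rewrite /J -scalerA (linZ _ _ fl) Jy scaler0.
  have nJ1 : ~ J 1 by rewrite /J scale1r; apply/eqP.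
  have [c [cnz cJ]] := cogen art HJ nJ1.
  pose T := fun v => exists a, S (v - a *: u).
  have HT : submod_ok T.
    split; first by exists 0; rewrite scale0r subr0; apply: SH0 HS.
    move=> b v1 v2 [a1 h1] [a2 h2]; exists (b * a1 + a2).
    have -> : b *: v1 + v2 - (b * a1 + a2) *: u = b *: (v1 - a1 *: u) + (v2 - a2 *: u).
      by rewrite scalerBr scalerA scalerDl opprD addrACA.
    by apply: SL.
  pose g v := c * epsilon (inhabits (0 : R)) (fun a => S (v - a *: u)).
  have gval : forall v a, S (v - a *: u) -> g v = c * a.
    move=> v a h; rewrite /g.
    set a' := epsilon _ _.
    have h' : S (v - a' *: u) := epsilon_spec _ (fun a => S (v - a *: u)) (ex_intro _ a h).
    have Jd : J (a - a').
      rewrite /J.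
      have -> : (a - a') *: u = (v - a' *: u) - (v - a *: u).
        by rewrite scalerBl opprD opprK addrACA subrr add0r addrC.
      by rewrite (linB _ _ fl) h h' subrr.
    apply/eqP; rewrite -subr_eq0 -mulrBr; apply/eqP.
    by rewrite -opprB mulrN (cJ _ Jd) oppr0.
  have sdg : sub_dual T g.
    move=> b v1 v2 [a1 h1] [a2 h2].
    rewrite (gval _ _ h1) (gval _ _ h2) (gval _ (b * a1 + a2)); first ring.
    have -> : b *: v1 + v2 - (b * a1 + a2) *: u = b *: (v1 - a1 *: u) + (v2 - a2 *: u).
      by rewrite scalerBr scalerA scalerDl opprD addrACA.
    by apply: SL.
  have [k [hk ke]] := extend HT inj sdg.
  have kS : forall v, S v -> k v = 0.
    move=> v Sv; rewrite ke; last by exists 0; rewrite scale0r subr0.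
    by rewrite (gval _ 0) ?mulr0 // scale0r subr0.
  have ku : k u = c.
    rewrite ke; last by exists 1; rewrite scale1r subrr; apply: SH0 HS.
    by rewrite (gval _ 1) ?mulr1 // scale1r subrr; apply: SH0 HS.
  move: cnz; rewrite -ku ue (lfZ _ _ hk) (lf_row _ hk) mulr_sumr big1 ?eqxx //.
  move=> l _; rewrite mulrCA.
  by have := kill k hk kS l; rewrite mulrC => ->; rewrite mulr0.
- move=> ann.
  pose ext (phi : 'rV[R]_n -> R) := epsilon (inhabits (fun _ : 'rV[R]_n => 0 : R))
     (fun h => is_lform h /\ sub_eq S h phi).
  have extP : forall phi, sub_dual S phi -> is_lform (ext phi) /\ sub_eq S (ext phi) phi.
    by move=> phi hp; exact: (epsilon_spec _ _ (extend HS inj hp)).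
  have Sre : forall j, S (r *: delta_mx 0 j) by move=> j; rewrite /S (linZ _ _ fl) ann.
  pose Mat (phi : 'I_n -> 'rV[R]_n -> R) := \matrix_(i, j) ext (phi i) (delta_mx 0 j).
  have rMat : forall phi i j, sub_dual S (phi i) -> r * Mat phi i j = phi i (r *: delta_mx 0 j).
    move=> phi i j hp; case: (extP _ hp) => hl he.
    by rewrite mxE -(lfZ _ _ hl) he //; apply: Sre.
  exists (fun phi => r * \det (Mat phi)); split; first split.
  + move=> phi psi hphi hpsi he; apply: det_req => i j.
    by rewrite !rMat // he //; apply: Sre.
  + move=> phi i a psi chi hphi hpsi hchi.
    set B := Mat (upd phi i psi); set C := Mat (upd phi i chi).
    pose D := \matrix_(k, j) (if k == i then a * B i j + C i j else B k j).
    rewrite (@det_req _ _ r _ D).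
      rewrite (@determinant_multilinear _ _ D B C i a 1).
      * ring.
      * by apply/rowP => j; rewrite !mxE eqxx mul1r.
      * apply/matrixP => k j; rewrite !mxE eq_sym (negbTE (neq_lift i k)) //.
      * apply/matrixP => k j; by rewrite !mxE eq_sym (negbTE (neq_lift i k)) /upd eq_sym (negbTE (neq_lift i k)).
    move=> k j; rewrite [D k j]mxE; case: (eqVneq k i) => [->|nk].
      have hX : sub_dual S (fun u => a * psi u + chi u).
        move=> b u v hu hv; rewrite hpsi // hchi //; ring.
      rewrite rMat /upd ?eqxx //.
      rewrite mulrDr mulrCA /B /C !rMat /upd ?eqxx //.
    by rewrite /B !mxE /upd (negbTE nk).
  + move=> phi i j hphi nij he.
    pose D := \matrix_(k, l) Mat phi (if k == i then j else k) l.
    rewrite (@det_req _ _ r _ D).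
      rewrite (@determinant_alternate _ _ D i j nij) ?mulr0 //.
      by move=> l; rewrite !mxE eqxx eq_sym (negbTE nij).
    move=> k l; rewrite /D mxE; case: eqP => [->|] //.
    by rewrite !rMat // he //; apply: Sre.
  + rewrite (@det_req _ _ r _ 1%:M) ?det1 ?mulr1 //.
    move=> i j; rewrite rMat; last exact: hpi.
    rewrite /pi [LHS]mxE [in LHS]mxE [in RHS]mxE.
    by rewrite (_ : (ord0 == 0 :> 'I_1) = true).
Qed.
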